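(* Let $\psi:M_n\to M_m$ be $k$-partially entanglement breaking. If $\mathcal T$ is any operator system and $\phi:\mathcal T\to M_n$ is $k$-positive, then $\psi\circ\phi$ is completely positive.
   Context: A linear map $\phi$ is $k$-positive if $\mathrm{id}_k\otimes\phi$ is positive, completely positive if $k$-positive for all $k$. A map $\psi:M_n\to M_m$ is $k$-partially entanglement breaking ($k$-PEB) if $\psi\circ\phi$ is completely positive for every $k$-positive map $\phi:M_d\to M_n$, for every $d\ge1$. *)

(* Defs.v *)
(* Complex scalars are modelled as R[i] (mathcomp-real-closed
   complex numbers) over an arbitrary R : realType, i.e. the field C. *)
From HB Require Import structures.
From mathcomp Require Import all_boot all_order all_algebra.
From mathcomp Require Import reals.
From mathcomp.real_closed Require Export complex.
Set Implicit Arguments.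
Unset Strict Implicit.
Unset Printing Implicit Defensive.
Import Order.TTheory GRing.Theory Num.Theory.
Local Open Scope ring_scope.

Section Defs.
Variable R : realType.
Local Notation C := (R[i] : numClosedFieldType).

Definition psdf (I : finType) (A : I -> I -> C) : Prop :=
  (forall i j, A j i = (A i j)^*) /\
  (forall v : I -> C, 0 <= \sum_i \sum_j (v i)^* * A i j * v j).

Definition psd n (A : 'M[C]_n) : Prop := psdf (fun i j => A i j).

(* An element X of M_k(M_n) (a k x k block matrix with n x n blocks),
   viewed as a matrix over the index set 'I_k * 'I_n, i.e. in M_k (x) M_n = M_{kn}. *)
Definition blockf k n (X : 'I_k -> 'I_k -> 'M[C]_n) :
  ('I_k * 'I_n)%type -> ('I_k * 'I_n)%type -> C :=
  fun a b => X a.1 b.1 a.2 b.2.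

Definition kpos_mx k d n (phi : 'M[C]_d -> 'M[C]_n) : Prop :=
  forall X : 'I_k -> 'I_k -> 'M[C]_d,
    psdf (blockf X) -> psdf (blockf (fun i j => phi (X i j))).

Definition cp_mx d n (phi : 'M[C]_d -> 'M[C]_n) : Prop :=
  forall k, kpos_mx k phi.

Definition kPEB k n m (psi : {linear 'M[C]_n -> 'M[C]_m}) : Prop :=
  forall d : nat, (0 < d)%N ->
  forall phi : {linear 'M[C]_d -> 'M[C]_n},
    kpos_mx k phi -> cp_mx (psi \o phi).

Section OpSysOps.
Variable V : lmodType C.
Variable star : V -> V.

Definition herm_os p (X : 'I_p -> 'I_p -> V) : Prop :=
  forall i j, X i j = star (X j i).

Definition congr_os p q (a : 'M[C]_(p, q)) (X : 'I_p -> 'I_p -> V) :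
  'I_q -> 'I_q -> V :=
  fun i j => \sum_r \sum_s (((a r i)^* * a s j) *: X r s).

Definition unit_os (e : V) p : 'I_p -> 'I_p -> V :=
  fun i j => if i == j then e else 0.
End OpSysOps.

Record opsys (V : lmodType C) := OpSys {
  os_star : V -> V;
  os_starK : forall x, os_star (os_star x) = x;
  os_starD : forall x y, os_star (x + y) = os_star x + os_star y;
  os_starZ : forall (c : C) x, os_star (c *: x) = c^* *: os_star x;
  os_cone : forall p : nat, ('I_p -> 'I_p -> V) -> Prop;
  os_unit : V;
  os_cone_herm : forall p X, os_cone X -> @herm_os V os_star p X;
  os_coneD : forall p (X Y : 'I_p -> 'I_p -> V),
      os_cone X -> os_cone Y -> os_cone (fun i j => X i j + Y i j);
  os_coneZ : forall p (c : C) (X : 'I_p -> 'I_p -> V),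
      0 <= c -> os_cone X -> os_cone (fun i j => c *: X i j);
  os_cone_proper : forall p (X : 'I_p -> 'I_p -> V),
      os_cone X -> os_cone (fun i j => - X i j) -> forall i j, X i j = 0;
  os_cone_congr : forall p q (a : 'M[C]_(p, q)) (X : 'I_p -> 'I_p -> V),
      os_cone X -> os_cone (congr_os a X);
  os_unit_herm : os_star os_unit = os_unit;
  os_unit_order : forall p (X : 'I_p -> 'I_p -> V), herm_os os_star X ->
      exists r : C, 0 < r /\
        os_cone (fun i j => r *: unit_os os_unit i j + X i j);
  os_unit_archimedean : forall p (X : 'I_p -> 'I_p -> V),
      (forall r : C, 0 < r ->
        os_cone (fun i j => r *: unit_os os_unit i j + X i j)) ->
      os_cone X
}.

Definition kpos_os (V : lmodType C) (T : opsys V) k n (phi : V -> 'M[C]_n) : Prop :=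
  forall X : 'I_k -> 'I_k -> V,
    os_cone T X -> psdf (blockf (fun i j => phi (X i j))).

Definition cp_os (V : lmodType C) (T : opsys V) n (phi : V -> 'M[C]_n) : Prop :=
  forall k, kpos_os T k phi.

End Defs.

(* Main.v *)
Require Import Defs.
From HB Require Import structures.
From mathcomp Require Import all_boot all_order all_algebra.
From mathcomp Require Import reals.
From mathcomp.real_closed Require Import complex.
From mathcomp Require Import ring.
Set Implicit Arguments.
Unset Strict Implicit.
Unset Printing Implicit Defensive.
Import Order.TTheory GRing.Theory Num.Theory.
Local Open Scope ring_scope.

Section Psd.
Variable R : realType.
Local Notation C := (R[i] : numClosedFieldType).
Variable I : finType.
Implicit Types (A B : I -> I -> C) (v w : I -> C).

Definition sesq A v w : C := \sum_i \sum_j (v i)^* * A i j * w j.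

Lemma sesqDl A v v' w : sesq A (fun k => v k + v' k) w = sesq A v w + sesq A v' w.
Proof.
rewrite /sesq -big_split; apply: eq_bigr => i _; rewrite -big_split.
by apply: eq_bigr => j _; rewrite rmorphD /= !mulrDl.
Qed.

Lemma sesqDr A v w w' : sesq A v (fun k => w k + w' k) = sesq A v w + sesq A v w'.
Proof.
rewrite /sesq -big_split; apply: eq_bigr => i _; rewrite -big_split.
by apply: eq_bigr => j _; rewrite !mulrDr.
Qed.

Lemma sesqZl A c v w : sesq A (fun k => c * v k) w = c^* * sesq A v w.
Proof.
rewrite /sesq mulr_sumr; apply: eq_bigr => i _; rewrite mulr_sumr.
by apply: eq_bigr => j _; rewrite rmorphM /= !mulrA.
Qed.

Lemma sesqZr A c v w : sesq A v (fun k => c * w k) = c * sesq A v w.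
Proof.
rewrite /sesq mulr_sumr; apply: eq_bigr => i _; rewrite mulr_sumr.
by apply: eq_bigr => j _; rewrite mulrCA.
Qed.

Definition ev (i : I) : I -> C := fun k => (k == i)%:R.

Lemma ev_ne i k : k != i -> ev i k = 0.
Proof. by rewrite /ev => /negbTE ->. Qed.

Lemma sesq_ee A i j : sesq A (ev i) (ev j) = A i j.
Proof.
rewrite /sesq (bigD1 i) //= [X in _ + X]big1 => [|k kn]; last first.
  by rewrite big1 // => l _; rewrite (ev_ne kn) rmorph0 !mul0r.
rewrite addr0 (bigD1 j) //= [X in _ + X]big1 => [|k kn]; last by rewrite (ev_ne kn) mulr0.
by rewrite /ev !eqxx rmorph1 mul1r mulr1 addr0.
Qed.

Lemma sesq_el A i w : sesq A (ev i) w = \sum_j A i j * w j.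
Proof.
rewrite /sesq (bigD1 i) //= [X in _ + X]big1 => [|k kn]; last first.
  by rewrite big1 // => l _; rewrite (ev_ne kn) rmorph0 !mul0r.
by rewrite addr0; apply: eq_bigr => j _; rewrite /ev eqxx rmorph1 mul1r.
Qed.

Lemma sesq_er A v j : sesq A v (ev j) = \sum_i (v i)^* * A i j.
Proof.
rewrite /sesq; apply: eq_bigr => i _.
rewrite (bigD1 j) //= [X in _ + X]big1 => [|k kn]; last by rewrite (ev_ne kn) mulr0.
by rewrite /ev eqxx mulr1 addr0.
Qed.

Lemma psdf_ext A B : (forall i j, A i j = B i j) -> psdf A -> psdf B.
Proof.
move=> e [h p]; split=> [i j|v]; first by rewrite -!e.
by under eq_bigr do under eq_bigr do rewrite -e; apply: p.
Qed.

Lemma psdf_add A B : psdf A -> psdf B -> psdf (fun i j => A i j + B i j).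
Proof.
move=> [hA pA] [hB pB]; split=> [i j|v]; first by rewrite rmorphD /= hA hB.
have -> : \sum_i \sum_j (v i)^* * (A i j + B i j) * v j = sesq A v v + sesq B v v.
  rewrite /sesq -big_split; apply: eq_bigr => i _; rewrite -big_split.
  by apply: eq_bigr => j _; rewrite mulrDr mulrDl.
exact: addr_ge0 (pA v) (pB v).
Qed.

Lemma psdf_scale c A : 0 <= c -> psdf A -> psdf (fun i j => c * A i j).
Proof.
move=> c0 [hA pA]; split=> [i j|v]; first by rewrite rmorphM /= geC0_conj // hA.
have -> : \sum_i \sum_j (v i)^* * (c * A i j) * v j = c * sesq A v v.
  rewrite /sesq mulr_sumr; apply: eq_bigr => i _; rewrite mulr_sumr.
  by apply: eq_bigr => j _; rewrite mulrCA !mulrA.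
exact: mulr_ge0 c0 (pA v).
Qed.

Lemma psdf_zero : psdf (fun _ _ : I => (0 : C)).
Proof.
split=> [i j|v]; first by rewrite rmorph0.
by rewrite big1 // => i _; rewrite big1 // => j _; rewrite mulr0 mul0r.
Qed.

Lemma psdf_sum (T : Type) (s : seq T) (F : T -> I -> I -> C) :
  (forall x, @psdf R I (F x)) -> psdf (fun i j => \sum_(x <- s) F x i j).
Proof.
move=> hF; elim: s => [|x s IH].
  by apply: psdf_ext (psdf_zero) => i j; rewrite big_nil.
apply: psdf_ext (psdf_add (hF x) IH) => i j; by rewrite big_cons.
Qed.

Lemma psdf_rank1 (u : I -> C) : psdf (fun i j => u i * (u j)^*).
Proof.
split=> [i j|v]; first by rewrite rmorphM /= conjCK mulrC.
have -> : \sum_i \sum_j (v i)^* * (u i * (u j)^*) * v j =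
   (\sum_i (v i)^* * u i) * (\sum_i (v i)^* * u i)^*.
  rewrite mulr_suml; apply: eq_bigr => i _; rewrite rmorph_sum mulr_sumr /=.
  by apply: eq_bigr => j _; rewrite rmorphM /= conjCK; ring.
exact: mul_conjC_ge0.
Qed.

Lemma psdf_form A v : psdf A -> 0 <= sesq A v v.
Proof. by case=> _ p; apply: p. Qed.

Lemma psdf_diag A i : psdf A -> 0 <= A i i.
Proof. by move=> h; rewrite -sesq_ee; apply: psdf_form. Qed.


Lemma psdf_row0 A i j : psdf A -> A i i = 0 -> A i j = 0.
Proof.
move=> hA Aii.
have hh := hA.1.
set z := A i j; set a := A j j.
have a0 : 0 <= a by apply: psdf_diag.
pose r := z * z^*.
have r0 : 0 <= r by apply: mul_conjC_ge0.
have a1 : 0 < a + 1 by apply: ltr_wpDl a0 _; apply: ltr01.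
pose t := r / (a + 1).
have t0 : 0 <= t by apply: divr_ge0 r0 (ltW a1).
have tc : t^* = t by apply: geC0_conj.
pose v := fun k => (- z) * ev i k + t * ev j k.
have := psdf_form v hA.
rewrite /v sesqDl !sesqDr !sesqZl !sesqZr !sesq_ee Aii (hh i j) -/z -/a tc rmorphN /=.
have a1n : a + 1 != 0 by rewrite gt_eqF.
have -> : - z^* * (- z * 0) + - z^* * (t * z) + (t * (- z * z^*) + t * (t * a)) =
   - (r ^+ 2 * ((a + 2%:R) / (a + 1) ^+ 2)).
  rewrite /t /r; field; exact: a1n.
rewrite oppr_ge0 => hle.
have hge : 0 <= r ^+ 2 * ((a + 2%:R) / (a + 1) ^+ 2).
  apply: mulr_ge0; first exact: exprn_ge0.
  apply: divr_ge0; last exact: exprn_ge0 (ltW a1).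
  by apply: addr_ge0 a0 _; apply: ler0n.
have /eqP := le_anti (introT andP (conj hle hge)).
rewrite mulf_eq0 => /orP [].
  by rewrite expf_eq0 /= /r mul_conjC_eq0 => /eqP.
rewrite mulf_eq0 invr_eq0 expf_eq0 /= (negbTE a1n) orbF.
have : 0 < a + 2%:R by apply: ltr_wpDl a0 _; apply: ltr0n.
by move=> /gt_eqF ->.
Qed.


Lemma sesq_sub A B v w :
  sesq (fun i j => A i j - B i j) v w = sesq A v w - sesq B v w.
Proof.
rewrite /sesq -sumrB; apply: eq_bigr => i _; rewrite -sumrB.
by apply: eq_bigr => j _; rewrite mulrBr mulrBl.
Qed.

Lemma sesq_rank1 (u : I -> C) v w :
  sesq (fun i j => u i * (u j)^*) v w =
  (\sum_i (v i)^* * u i) * (\sum_j (u j)^* * w j).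
Proof.
rewrite /sesq mulr_suml; apply: eq_bigr => i _; rewrite mulr_sumr.
by apply: eq_bigr => j _; ring.
Qed.

Lemma psdf_step A i0 : psdf A -> A i0 i0 != 0 ->
  let u := fun i => (sqrtC (A i0 i0))^-1 * A i i0 in
  psdf (fun i j => A i j - u i * (u j)^*).
Proof.
move=> hA an.
have hh := hA.1.
set a := A i0 i0 in an *.
have a0 : 0 <= a by apply: psdf_diag.
have ac : a^* = a by apply: geC0_conj.
set s := sqrtC a.
have s0 : 0 <= s by rewrite sqrtC_ge0.
have sc : s^* = s by apply: geC0_conj.
have ss : s * s = a by rewrite -expr2 sqrtCK.
have sn : s != 0 by rewrite sqrtC_eq0.
move=> u.
split=> [i j|v].
  by rewrite rmorphB /= -hh; congr (_ - _); rewrite [RHS]rmorphM /= conjCK mulrC.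
change (0 <= sesq (fun i j => A i j - u i * (u j)^*) v v).
rewrite sesq_sub sesq_rank1.
pose beta := \sum_j A i0 j * v j.
pose gamma := \sum_i (v i)^* * A i i0.
have gb : gamma = beta^*.
  rewrite /gamma /beta rmorph_sum /=; apply: eq_bigr => j _.
  by rewrite rmorphM /= -hh mulrC.
have e1 : \sum_i (v i)^* * u i = s^-1 * gamma.
  by rewrite /gamma mulr_sumr; apply: eq_bigr => i _; rewrite /u mulrCA.
have e2 : \sum_j (u j)^* * v j = s^-1 * beta.
  rewrite /beta mulr_sumr; apply: eq_bigr => j _.
  by rewrite /u rmorphM /= fmorphV /= sc -hh mulrA.
rewrite e1 e2.
pose t := beta / a.
pose w := fun k => v k + (- t) * ev i0 k.
have := psdf_form w hA.
rewrite /w sesqDl !sesqDr !sesqZl !sesqZr sesq_ee sesq_el sesq_er -/beta -/gamma -/a.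
rewrite gb /t rmorphN rmorphM /= fmorphV /= ac.
have an' : a != 0 := an.
move=> h; apply: le_trans h _; rewrite le_eqVlt; apply/orP; left; apply/eqP.
rewrite -ss; field; by rewrite sn.
Qed.


Lemma psdf_decomp_aux n : forall (S : {set I}) A, (#|S| <= n)%N -> psdf A ->
  (forall i j, i \notin S -> A i j = 0) ->
  exists s : seq (I -> C), forall i j, A i j = \sum_(u <- s) u i * (u j)^*.
Proof.
elim: n => [|n IH] S A hS hA hz.
  exists [::] => i j; rewrite big_nil; apply: hz.
  by move: hS; rewrite leqn0 cards_eq0 => /eqP ->; rewrite inE.
have [S0|[i0 i0S]] := set_0Vmem S.
  exists [::] => i j; rewrite big_nil; apply: hz; by rewrite S0 inE.
have hS' : (#|S :\ i0| <= n)%N.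
  by move: hS; rewrite (cardsD1 i0 S) i0S add1n ltnS.
have hz' : forall A', (forall i j, i \notin S -> A' i j = 0) ->
     (forall j, A' i0 j = 0) -> forall i j, i \notin S :\ i0 -> A' i j = 0.
  move=> A' h1 h2 i j; rewrite !inE negb_and negbK => /orP [/eqP ->|]; first exact: h2.
  exact: h1.
have [a0|an] := eqVneq (A i0 i0) 0.
  apply: (IH (S :\ i0)) => //; apply: hz' => // j; exact: psdf_row0.
pose u := fun i => (sqrtC (A i0 i0))^-1 * A i i0.
pose B := fun i j => A i j - u i * (u j)^*.
have hB : psdf B by exact: psdf_step hA an.
have hBz : forall i j, i \notin S :\ i0 -> B i j = 0.
  apply: hz' => [i j iS|j].
    by rewrite /B hz // /u (hz i i0 iS) mulr0 mul0r subr0.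
  rewrite /B /u rmorphM /= fmorphV /= geC0_conj; last by rewrite sqrtC_ge0 psdf_diag.
  rewrite -(hA.1 j i0); set s := sqrtC (A i0 i0).
  have sn : s != 0 by rewrite sqrtC_eq0.
  have ss : A i0 i0 = s * s by rewrite -expr2 sqrtCK.
  rewrite [A i0 i0]ss; field; exact: sn.
have [s hs] := IH (S :\ i0) B hS' hB hBz.
exists (u :: s) => i j; rewrite big_cons -hs /B; ring.
Qed.

Lemma psdf_decomp A : psdf A ->
  exists s : seq (I -> C), forall i j, A i j = \sum_(u <- s) u i * (u j)^*.
Proof.
move=> hA; apply: (@psdf_decomp_aux #|[set: I]| [set: I]) => // i j.
by rewrite inE.
Qed.

End Psd.
Section Map.
Variable R : realType.
Variable V : lmodType R[i].
Variables n p : nat.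
Variable phi : V -> 'M[R[i]]_n.
Variable X : 'I_p -> 'I_p -> V.

Definition phimap (A : 'M[R[i]]_p) : 'M[R[i]]_n :=
  \sum_i \sum_j A i j *: phi (X i j).

Lemma phimap_linear : linear phimap.
Proof.
move=> c A B; rewrite /phimap scaler_sumr -big_split; apply: eq_bigr => i _.
rewrite scaler_sumr -big_split; apply: eq_bigr => j _.
by rewrite !mxE scalerDl scalerA.
Qed.

HB.instance Definition _ := GRing.isLinear.Build R[i] 'M[R[i]]_p 'M[R[i]]_n _ phimap phimap_linear.
End Map.

Lemma entry_sum (R : realType) n (I : Type) (r : seq I) (E : I -> 'M[R[i]]_n) a b :
  (\sum_(x <- r) E x) a b = \sum_(x <- r) E x a b.
Proof. exact: summxE. Qed.

Lemma psdf_empty (R : realType) m (A : ('I_0 * 'I_m)%type -> ('I_0 * 'I_m)%type -> R[i]) :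
  psdf A.
Proof.
split; first by case=> [[]].
by move=> v; rewrite big1 // => -[[]].
Qed.

Theorem mainTheorem17 (R : realType) (k n m : nat) (hk : (0 < k)%N)
  (psi : {linear 'M[R[i]]_n -> 'M[R[i]]_m}) (hpsi : kPEB k psi)
  (V : lmodType R[i]) (T : opsys V) (phi : {linear V -> 'M[R[i]]_n})
  (hphi : kpos_os T k phi) :
  cp_os T (psi \o phi).
Proof.
case=> [|p] X hX; first exact: psdf_empty.
pose F : {linear 'M[R[i]]_p.+1 -> 'M[R[i]]_n} := phimap phi X.
have kF : kpos_mx k F.
  move=> Y hY; have [s hs] := psdf_decomp hY.
  pose alpha (u : ('I_k * 'I_p.+1)%type -> R[i]) : 'M[R[i]]_(p.+1, k) :=
    \matrix_(r, a) (u (a, r))^*.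
  apply: (psdf_ext _ (@psdf_sum _ _ _ s (fun u => blockf (fun a b => phi (congr_os (alpha u) X a b))) _)); last first.
    move=> u; apply: hphi; exact: os_cone_congr.
  move=> x y; rewrite /blockf /F /= /phimap.
  rewrite entry_sum /congr_os.
  have e1 : forall u, phi (\sum_r \sum_s0 (((alpha u) r x.1)^* * (alpha u) s0 y.1) *: X r s0) x.2 y.2
     = \sum_r \sum_s0 (u (x.1, r) * (u (y.1, s0))^*) * phi (X r s0) x.2 y.2.
    move=> u; rewrite linear_sum entry_sum; apply: eq_bigr => r _.
    rewrite linear_sum entry_sum; apply: eq_bigr => s0 _.
    by rewrite linearZ /= mxE !mxE conjCK.
  under eq_bigr do rewrite e1.
  have e2 : forall i, (\sum_j Y x.1 y.1 i j *: phi (X i j)) x.2 y.2 =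
     \sum_j \sum_(u <- s) (u (x.1, i) * (u (y.1, j))^*) * phi (X i j) x.2 y.2.
    move=> i; rewrite entry_sum; apply: eq_bigr => j _.
    by rewrite mxE -mulr_suml -hs.
  under [RHS]eq_bigr do rewrite e2.
  rewrite exchange_big /=; apply: eq_bigr => r _.
  by rewrite exchange_big.
have cF := hpsi p.+1 (ltn0Sn p) F kF p.+1.
have hD : psdf (blockf (fun a b : 'I_p.+1 => (delta_mx a b : 'M[R[i]]_p.+1))).
  apply: (psdf_ext _ (psdf_rank1 (fun x : ('I_p.+1 * 'I_p.+1)%type => ((x.2 == x.1)%:R : R[i])))).
  move=> x y; rewrite /blockf mxE rmorph_nat.
  by case: (x.2 == x.1); case: (y.2 == y.1); rewrite ?mulr1 ?mulr0 ?mul0r.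
have := cF _ hD.
apply: psdf_ext => x y; rewrite /blockf /= /phimap.
congr (psi _ x.2 y.2).
rewrite (bigD1 x.1) //= [X in _ + X]big1 => [|i ia]; last first.
  by rewrite big1 // => j _; rewrite mxE (negbTE ia) scale0r.
rewrite addr0 (bigD1 y.1) //= [X in _ + X]big1 => [|j jb]; last first.
  by rewrite mxE (negbTE jb) andbF scale0r.
by rewrite mxE !eqxx scale1r addr0.
Qed.
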